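(* Let $\theta>0$, $\nu\in\mathbb{C}$ with $\operatorname{Re}\nu>0$, and $s=\sigma+i\tau\in\mathbb{C}$. Then \[ |\Gamma(s,\theta,\nu)|\le 2^{\sigma}e^{-\operatorname{Re}(\nu)\theta/2}\,\Gamma\Big(\sigma,\frac{\theta}{2},\operatorname{Re}(\nu)\Big). \]
   Context: For $\nu$ with $\operatorname{Re}\nu>0$, $\theta>0$, $s\in\mathbb{C}$: $\Gamma(s,\theta,\nu)=\int_\theta^{+\infty}e^{-\nu y}y^{s-1}\,dy$. *)

(* Defs.v *)
From Stdlib Require Import Reals.
From Coquelicot Require Export Coquelicot.
Open Scope R_scope.

Definition Cexp (z : C) : C :=
  (exp (Re z) * cos (Im z), exp (Re z) * sin (Im z)).

Definition Rcpow (y : R) (s : C) : C := Cexp (RtoC (ln y) * s)%C.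

Definition Gamma_inc (s : C) (theta : R) (nu : C) : C :=
  @RInt_gen C_R_CompleteNormedModule
    (fun y : R => (Cexp (- (nu * RtoC y)) * Rcpow y (s - 1))%C)
    (at_point theta) (Rbar_locally p_infty).

(* Main.v *)
Require Import Defs.
From Stdlib Require Import Reals Lra.
From Coquelicot Require Import Coquelicot.
Open Scope R_scope.
Lemma minus_plus_cancel {G : AbelianGroup} (A B : G) : minus (plus A B) A = B.
Proof.
  unfold minus. rewrite (plus_comm A B). rewrite <- plus_assoc.
  rewrite (plus_opp_r (G:=G)). apply plus_zero_r.
Qed.

Section Gen.
Context {V : CompleteNormedModule R_AbsRing}.

Lemma diff_bound (f : R -> V) (g : R -> R) a u v :
  a <= u <= v -> ex_RInt f a v -> ex_RInt g a v ->
  (forall x, a <= x -> norm (f x) <= g x) ->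
  norm (minus (RInt f a v) (RInt f a u)) <= RInt g a v - RInt g a u.
Proof.
  intros Hu Hf Hg Hn.
  assert (Hf1 : ex_RInt f a u) by (apply ex_RInt_Chasles_1 with v; lra || auto).
  assert (Hf2 : ex_RInt f u v) by (apply ex_RInt_Chasles_2 with a; lra || auto).
  assert (Hg1 : ex_RInt g a u) by (apply (ex_RInt_Chasles_1 (V:=R_CompleteNormedModule)) with v; lra || auto).
  assert (Hg2 : ex_RInt g u v) by (apply (ex_RInt_Chasles_2 (V:=R_CompleteNormedModule)) with a; lra || auto).
  rewrite <- (RInt_Chasles f a u v Hf1 Hf2).
  rewrite <- (RInt_Chasles (V:=R_CompleteNormedModule) g a u v Hg1 Hg2).
  rewrite (minus_plus_cancel (G:=V)).
  apply Rle_trans with (RInt g u v); [ | right; symmetry; apply Rplus_minus_l].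
  apply norm_RInt_le with f g u v; try apply RInt_correct; auto; try lra.
  intros x Hx; apply Hn; lra. apply (RInt_correct (V:=R_CompleteNormedModule)); auto.
Qed.

Lemma absdiff_bound (f : R -> V) (g : R -> R) a u v :
  a <= u -> a <= v ->
  (forall b, a <= b -> ex_RInt f a b) -> (forall b, a <= b -> ex_RInt g a b) ->
  (forall x, a <= x -> norm (f x) <= g x) ->
  norm (minus (RInt f a v) (RInt f a u)) <= Rabs (RInt g a v - RInt g a u).
Proof.
  intros Hu Hv Hf Hg Hn.
  destruct (Rle_lt_dec u v) as [H|H].
  - eapply Rle_trans. apply diff_bound; auto. apply Rle_abs.
  - apply Rlt_le in H. rewrite <- (opp_minus (G:=V)), (norm_opp (V:=V)), Rabs_minus_sym.
    eapply Rle_trans. apply diff_bound; auto. apply Rle_abs.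
Qed.

Lemma dom_ex (f : R -> V) (g : R -> R) a lg :
  (forall b, a <= b -> ex_RInt f a b) -> (forall b, a <= b -> ex_RInt g a b) ->
  (forall x, a <= x -> norm (f x) <= g x) ->
  filterlim (fun b => RInt g a b) (Rbar_locally p_infty) (locally lg) ->
  exists l, filterlim (fun b => RInt f a b) (Rbar_locally p_infty) (locally l).
Proof.
  intros Hf Hg Hn Hlim.
  set (F := filtermap (fun b => RInt f a b) (Rbar_locally p_infty)).
  assert (PF : ProperFilter F) by (apply filtermap_proper_filter; apply Rbar_locally_filter).
  assert (CF : cauchy F).
  { intros eps.
    assert (He2 : 0 < eps / 2) by (destruct eps; simpl; lra).
    destruct (proj1 (filterlim_locally _ _) Hlim (mkposreal _ He2)) as [M HM].
    set (b0 := Rmax a M + 1).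
    exists (RInt f a b0).
    exists (Rmax a M). intros b Hb.
    apply (@norm_compat1 R_AbsRing V).
    assert (Hab : a <= b) by (pose proof (Rmax_l a M); lra).
    assert (Hab0 : a <= b0) by (unfold b0; pose proof (Rmax_l a M); lra).
    eapply Rle_lt_trans. apply absdiff_bound; auto.
    assert (H1 := HM b (Rle_lt_trans _ _ _ (Rmax_r a M) Hb)).
    assert (H2 := HM b0 ltac:(unfold b0; pose proof (Rmax_r a M); lra)).
    unfold ball in H1, H2; simpl in H1, H2; unfold AbsRing_ball, abs, minus, plus, opp in H1, H2;
      simpl in H1, H2.
    apply Rabs_def2 in H1. apply Rabs_def2 in H2.
    apply Rabs_def1; lra. }
  exists (lim F).
  apply filterlim_locally. intros eps.
  apply (complete_cauchy F PF CF eps).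
Qed.

Lemma gen_of_lim (f : R -> V) a l :
  (forall b, a <= b -> ex_RInt f a b) ->
  filterlim (fun b => RInt f a b) (Rbar_locally p_infty) (locally l) ->
  is_RInt_gen f (at_point a) (Rbar_locally p_infty) l.
Proof.
  intros Hf Hlim P HP.
  simpl. unfold filtermapi.
  apply Filter_prod with (fun x => x = a) (fun b => a <= b /\ P (RInt f a b)).
  - reflexivity.
  - apply filter_and.
    + exists a. intros; lra.
    + apply Hlim. exact HP.
  - intros x y -> [Hy HPy]. simpl. exists (RInt f a y). split; auto.
    apply RInt_correct; auto.
Qed.
End Gen.
Definition fI (nu s : C) (y : R) : C := (Cexp (- (nu * RtoC y)) * Rcpow y (s - 1))%C.

Lemma fI_ex (nu s : C) u v : 0 < u <= v -> ex_RInt (V:=C_R_CompleteNormedModule) (fI nu s) u v.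
Proof.
  intros Huv.
  apply (ex_RInt_fct_extend_pair (U:=R_NormedModule) (V:=R_NormedModule)).
  - apply (ex_RInt_continuous (V:=R_CompleteNormedModule)).
    intros z Hz. rewrite Rmin_left in Hz by lra. rewrite Rmax_right in Hz by lra.
    apply (ex_derive_continuous (K:=R_AbsRing) (V:=R_NormedModule)).
    unfold fI, Cexp, Rcpow, Cmult, Copp, Cminus, Cplus, Copp, RtoC, Re, Im; simpl.
    auto_derive. lra.
  - apply (ex_RInt_continuous (V:=R_CompleteNormedModule)).
    intros z Hz. rewrite Rmin_left in Hz by lra. rewrite Rmax_right in Hz by lra.
    apply (ex_derive_continuous (K:=R_AbsRing) (V:=R_NormedModule)).
    unfold fI, Cexp, Rcpow, Cmult, Copp, Cminus, Cplus, Copp, RtoC, Re, Im; simpl.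
    auto_derive. lra.
Qed.

Lemma Cmod_Cexp z : Cmod (Cexp z) = exp (Re z).
Proof.
  unfold Cmod, Cexp; simpl.
  transitivity (sqrt (exp (Re z) ^ 2)).
  - f_equal. pose proof (sin2_cos2 (Im z)). unfold Rsqr in H. simpl. nra.
  - apply sqrt_pow2. left; apply exp_pos.
Qed.

Lemma fI_norm nu s y : Cmod (fI nu s y) = exp (-(Re nu * y)) * exp (ln y * (Re s - 1)).
Proof.
  unfold fI, Rcpow. rewrite Cmod_mult, !Cmod_Cexp.
  f_equal; f_equal; unfold Re, RtoC, Cmult, Copp, Cminus, Cplus; simpl; ring.
Qed.

Lemma fI_real a sg y : fI (RtoC a) (RtoC sg) y = RtoC (exp (-(a*y)) * exp (ln y * (sg-1))).
Proof.
  unfold fI, Cexp, Rcpow, Cmult, Copp, Cminus, Cplus, Copp, RtoC, Re, Im; simpl.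
  replace (- (a * 0 + 0 * y)) with 0 by ring.
  replace (ln y * (0 + - 0) + 0 * (sg + - (1))) with 0 by ring.
  replace (- (a * y - 0 * 0)) with (- (a * y)) by ring.
  replace (ln y * (sg + - (1)) - 0 * (0 + - 0)) with (ln y * (sg - 1)) by ring.
  rewrite cos_0, sin_0. f_equal; ring.
Qed.
Lemma exp_le' x y : x <= y -> exp x <= exp y.
Proof. intros [H|H]. left; apply exp_increasing; auto. subst; lra. Qed.

Lemma ln_le_lin x : 0 < x -> ln x <= x - 1.
Proof. intros Hx. pose proof (exp_ineq1_le (ln x)). rewrite exp_ln in H; lra. Qed.

Lemma ln_bound p c y0 : 0 < c -> 0 < y0 -> exists C, forall y, y0 <= y -> ln y * p <= c * y + C.
Proof.
  intros Hc Hy0.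
  destruct (Rle_lt_dec p 0) as [Hp|Hp].
  - exists (ln y0 * p). intros y Hy.
    pose proof (ln_le y0 y Hy0 Hy). nra.
  - exists (p * (-1 - ln (c / p))). intros y Hy.
    assert (Hd : 0 < c / p) by (apply Rdiv_lt_0_compat; lra).
    pose proof (ln_le_lin (c / p * y) ltac:(nra)).
    rewrite ln_mult in H by lra.
    assert (p * (c / p * y) = c * y) by (field; lra).
    nra.
Qed.

Definition gI (a p y : R) := exp (-(a*y)) * exp (ln y * p).


Lemma gI_ex a p u v : 0 < u <= v -> ex_RInt (gI a p) u v.
Proof.
  intros Huv.
  apply (ex_RInt_continuous (V:=R_CompleteNormedModule)).
  intros z Hz. rewrite Rmin_left in Hz by lra. rewrite Rmax_right in Hz by lra.
  apply (ex_derive_continuous (K:=R_AbsRing) (V:=R_NormedModule)).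
  unfold gI. auto_derive. lra.
Qed.

Lemma gI_pos a p y : 0 <= gI a p y.
Proof. unfold gI. pose proof (exp_pos (-(a*y))). pose proof (exp_pos (ln y * p)). nra. Qed.

Lemma gI_dom a p y0 : 0 < a -> 0 < y0 -> exists K, 0 < K /\
  forall y, y0 <= y -> gI a p y <= K * exp (-((a/2) * y)).
Proof.
  intros Ha Hy0.
  destruct (ln_bound p (a/2) y0 ltac:(lra) Hy0) as [C HC].
  exists (exp C). split. apply exp_pos.
  intros y Hy. unfold gI. rewrite <- !exp_plus. apply exp_le'.
  specialize (HC y Hy). lra.
Qed.

Definition hI (K c y : R) := K * exp (-(c*y)).

Lemma hI_is K c u v : 0 < c -> is_RInt (hI K c) u v (K / c * exp (-(c*u)) - K / c * exp (-(c*v))).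
Proof.
  intros Hc.
  set (F := fun y => - (K / c) * exp (-(c*y))).
  assert (H : is_RInt (hI K c) u v (minus (F v) (F u))).
  { apply (is_RInt_derive (V:=R_CompleteNormedModule)).
    - intros x _. unfold hI, F. auto_derive. auto. field. lra.
    - intros x _. unfold hI. apply (ex_derive_continuous (K:=R_AbsRing) (V:=R_NormedModule)).
      auto_derive. auto. }
  replace (K / c * exp (-(c*u)) - K / c * exp (-(c*v))) with (minus (F v) (F u)); auto.
  unfold F, minus, plus, opp; simpl; ring.
Qed.

Lemma hI_lim a K c : 0 < c -> 0 < K ->
  filterlim (fun b => RInt (hI K c) a b) (Rbar_locally p_infty) (locally (K / c * exp (-(c*a)))).
Proof.
  intros Hc HK.
  apply filterlim_locally. intros eps.
  assert (He : 0 < eps * c / K).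
  { destruct eps as [e He]; simpl. apply Rdiv_lt_0_compat; nra. }
  exists (- ln (eps * c / K) / c). intros b Hb.
  rewrite (is_RInt_unique _ _ _ _ (hI_is K c a b Hc)).
  unfold ball; simpl; unfold AbsRing_ball, abs, minus, plus, opp; simpl.
  assert (H1 : - (c * b) < ln (eps * c / K)).
  { apply (Rmult_lt_compat_l c) in Hb; auto. field_simplify in Hb; lra. }
  apply exp_increasing in H1. rewrite exp_ln in H1 by auto.
  pose proof (exp_pos (-(c*b))).
  replace (K / c * exp (- (c * a)) - K / c * exp (- (c * b)) + - (K / c * exp (- (c * a))))
    with (- (K / c * exp (- (c * b)))) by ring.
  rewrite Rabs_Ropp, Rabs_pos_eq.
  - apply (Rmult_lt_compat_l (K / c)) in H1. 2: apply Rdiv_lt_0_compat; auto.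
    replace (K / c * (eps * c / K)) with (pos eps) in H1 by (field; lra). lra.
  - apply Rmult_le_pos. left; apply Rdiv_lt_0_compat; auto. lra.
Qed.

Lemma CRnorm (z : C) : @norm R_AbsRing C_R_CompleteNormedModule z = Cmod z.
Proof. exact (eq_sym (Cmod_norm z)). Qed.

Lemma Cmod_le_sum (z : C) : Cmod z <= Rabs (fst z) + Rabs (snd z).
Proof.
  unfold Cmod. rewrite <- (sqrt_pow2 (Rabs (fst z) + Rabs (snd z))).
  2: pose proof (Rabs_pos (fst z)); pose proof (Rabs_pos (snd z)); lra.
  apply sqrt_le_1_alt.
  rewrite <- (pow2_abs (fst z)), <- (pow2_abs (snd z)).
  pose proof (Rabs_pos (fst z)); pose proof (Rabs_pos (snd z)). nra.
Qed.

Lemma Cmod_diff (y l : C) : Rabs (Cmod y - Cmod l) <= Rabs (fst y - fst l) + Rabs (snd y - snd l).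
Proof.
  pose proof (Cmod_le_sum (y - l)%C) as H. simpl in H.
  pose proof (Cmod_le_sum (l - y)%C) as H'. simpl in H'.
  pose proof (Rabs_minus_sym (fst l) (fst y)). pose proof (Rabs_minus_sym (snd l) (snd y)).
  pose proof (Cmod_triangle (y - l)%C l) as T1. pose proof (Cmod_triangle (l - y)%C y) as T2.
  replace (y - l + l)%C with y in T1 by ring.
  replace (l - y + y)%C with l in T2 by ring.
  apply Rabs_le. unfold Rminus in *. lra.
Qed.

Lemma pw a p sg y th : 0 < a -> th / 2 <= y -> p = sg - 1 -> 0 < y ->
  2 * gI a p (2 * y) <= Rpower 2 sg * exp (-(a * th / 2)) * gI a p y.
Proof.
  intros Ha Hy Hp Hy0. unfold gI, Rpower.
  rewrite ln_mult by lra.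
  replace (2 * (exp (- (a * (2 * y))) * exp ((ln 2 + ln y) * p)))
    with (exp (ln 2 + - (a * (2 * y)) + (ln 2 + ln y) * p))
    by (rewrite !exp_plus, exp_ln by lra; ring).
  rewrite <- !exp_plus. apply exp_le'. subst p.
  assert (a * (y - th/2) >= 0) by nra. nra.
Qed.

Lemma Lex a p y0 a0 : 0 < a -> 0 < y0 -> y0 <= a0 ->
  exists L, filterlim (fun b => RInt (gI a p) a0 b) (Rbar_locally p_infty) (locally L).
Proof.
  intros Ha Hy0 Ha0.
  destruct (gI_dom a p y0 Ha Hy0) as [K [HK HKd]].
  apply (dom_ex (V:=R_CompleteNormedModule) (gI a p) (hI K (a/2)) a0
     (K / (a/2) * exp (-((a/2)*a0)))).
  - intros b Hb. apply gI_ex. lra.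
  - intros b Hb. apply (ex_RInt_continuous (V:=R_CompleteNormedModule)).
    intros z _. unfold hI. apply (ex_derive_continuous (K:=R_AbsRing) (V:=R_NormedModule)).
    auto_derive. auto.
  - intros x Hx. change (norm (gI a p x)) with (Rabs (gI a p x)).
    rewrite Rabs_pos_eq by apply gI_pos. apply HKd. lra.
  - apply hI_lim; lra.
Qed.

Lemma partial_le a p u c L : u <= c -> 0 < u ->
  filterlim (fun b => RInt (gI a p) u b) (Rbar_locally p_infty) (locally L) ->
  RInt (gI a p) u c <= L.
Proof.
  intros Huc Hu HL.
  assert (H := filterlim_le (F := Rbar_locally p_infty) (fun _ => RInt (gI a p) u c)
     (fun b => RInt (gI a p) u b) (RInt (gI a p) u c) L).
  simpl in H. apply H.
  - exists c. intros d Hd.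
    rewrite <- (RInt_Chasles (V:=R_CompleteNormedModule) (gI a p) u c d).
    + assert (0 <= RInt (gI a p) c d).
      { apply RInt_ge_0. lra. apply gI_ex; lra. intros; apply gI_pos. }
      unfold plus; simpl. lra.
    + apply gI_ex; lra.
    + apply gI_ex; lra.
  - apply filterlim_const.
  - exact HL.
Qed.

Theorem lemma4p11 (theta : R) (nu s : C) :
  0 < theta -> 0 < Re nu ->
  Cmod (Gamma_inc s theta nu) <=
    Rpower 2 (Re s) * exp (- (Re nu * theta / 2)) *
    Re (Gamma_inc (RtoC (Re s)) (theta / 2) (RtoC (Re nu))).
Proof.
  intros Ht Ha.
  set (a := Re nu). set (p := Re s - 1).
  destruct (Lex a p (theta/2) (theta/2) Ha ltac:(lra) ltac:(lra)) as [L1 HL1].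
  destruct (Lex a p (theta/2) theta Ha ltac:(lra) ltac:(lra)) as [L0 HL0].
  assert (HG' : Gamma_inc (RtoC (Re s)) (theta/2) (RtoC a) = RtoC L1).
  { unfold Gamma_inc. apply (is_RInt_gen_unique (V:=C_R_CompleteNormedModule)).
    change (fun y : R => (Cexp (- (RtoC a * RtoC y)) * Rcpow y (RtoC (Re s) - 1))%C)
      with (fI (RtoC a) (RtoC (Re s))).
    apply gen_of_lim.
    - intros b Hb. apply fI_ex; lra.
    - assert (Hk : forall b, theta / 2 <= b ->
        RInt (V:=C_R_CompleteNormedModule) (fI (RtoC a) (RtoC (Re s))) (theta/2) b
         = RtoC (RInt (gI a p) (theta/2) b)).
      { intros b Hb. apply is_RInt_unique.
        apply (is_RInt_ext (V:=C_R_NormedModule) (fun y => RtoC (gI a p y))).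
        + intros x Hx. rewrite Rmin_left in Hx by lra.
          rewrite fI_real. reflexivity.
        + apply (is_RInt_fct_extend_pair (U:=R_NormedModule) (V:=R_NormedModule)).
          * simpl. apply (RInt_correct (V:=R_CompleteNormedModule)). apply gI_ex; lra.
          * simpl. pose proof (is_RInt_const (V:=R_NormedModule) (theta/2) b 0).
            rewrite (scal_zero_r (V:=R_NormedModule)) in H. exact H. }
      eapply filterlim_ext_loc.
      { exists (theta/2). intros b Hb. symmetry. apply Hk. lra. }
      apply filterlim_locally. intros eps.
      destruct (proj1 (filterlim_locally _ _) HL1 eps) as [M HM].
      exists M. intros b Hb. split.
      + apply HM; auto.
      + apply ball_center. }
  assert (Hfex : forall b, theta <= b -> ex_RInt (V:=C_R_CompleteNormedModule) (fI nu s) theta b).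
  { intros b Hb. apply fI_ex; lra. }
  assert (Hnorm : forall x, theta <= x -> @norm R_AbsRing C_R_CompleteNormedModule (fI nu s x) <= gI a p x).
  { intros x Hx. rewrite CRnorm, fI_norm. right; reflexivity. }
  destruct (dom_ex (V:=C_R_CompleteNormedModule) (fI nu s) (gI a p) theta L0 Hfex
     ltac:(intros b Hb; apply gI_ex; lra) Hnorm HL0) as [l Hl].
  assert (HG : Gamma_inc s theta nu = l).
  { unfold Gamma_inc. apply (is_RInt_gen_unique (V:=C_R_CompleteNormedModule)).
    apply gen_of_lim; auto. }
  fold a. rewrite HG, HG'. simpl (Re (RtoC L1)).
  set (Cc := Rpower 2 (Re s) * exp (- (a * theta / 2))).
  assert (HCc : 0 <= Cc).
  { unfold Cc, Rpower. pose proof (exp_pos (Re s * ln 2)). pose proof (exp_pos (- (a * theta / 2))). nra. }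
  assert (H := filterlim_le (F := Rbar_locally p_infty) (fun b => Cmod (RInt (V:=C_R_CompleteNormedModule) (fI nu s) theta b))
     (fun _ => Cc * L1) (Cmod l) (Cc * L1)).
  simpl in H. apply H; clear H.
  - exists theta. intros b Hb.
    rewrite <- CRnorm.
    assert (Hgex : ex_RInt (gI a p) theta b) by (apply gI_ex; lra).
    apply Rle_trans with (RInt (gI a p) theta b).
    { apply (norm_RInt_le (fI nu s) (gI a p) theta b).
      lra. intros; apply Hnorm; lra.
      apply (RInt_correct (V:=C_R_CompleteNormedModule)). apply Hfex; lra.
      apply (RInt_correct (V:=R_CompleteNormedModule)). auto. }
    assert (Hcl : is_RInt (fun y => scal 2 (gI a p (2 * y + 0))) (theta/2) (b/2) (RInt (gI a p) theta b)).
    { apply (is_RInt_comp_lin (V:=R_NormedModule)).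
      replace (2 * (theta/2) + 0) with theta by field.
      replace (2 * (b/2) + 0) with b by field.
      apply (RInt_correct (V:=R_CompleteNormedModule)). auto. }
    rewrite <- (is_RInt_unique _ _ _ _ Hcl).
    apply Rle_trans with (RInt (fun y => scal Cc (gI a p y)) (theta/2) (b/2)).
    { apply RInt_le. lra. eexists; exact Hcl.
      apply (ex_RInt_scal (V:=R_NormedModule)). apply gI_ex; lra.
      intros x Hx. unfold scal; simpl; unfold mult; simpl.
      replace (2 * x + 0) with (2 * x) by ring.
      unfold Cc. apply pw; auto; lra. }
    rewrite (RInt_scal (V:=R_CompleteNormedModule)) by (apply gI_ex; lra).
    unfold scal; simpl; unfold mult; simpl.
    apply Rmult_le_compat_l; auto.
    apply (partial_le a p (theta/2)); auto; lra.
  - apply filterlim_comp with (locally l).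
    + exact Hl.
    + intros P [eps HP]. exists (pos_div_2 eps). intros y [H1 H2]. apply HP.
      unfold ball in H1, H2 |- *; simpl in H1, H2 |- *.
      unfold AbsRing_ball, abs, minus, plus, opp in H1, H2 |- *; simpl in H1, H2 |- *.
      pose proof (Cmod_diff y l). unfold Rminus in H. lra.
  - apply filterlim_const.
Qed.
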